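(* Consider the delayed online learning protocol described in the context, and assume that delayed dual averaging (DDA) is run with a non-increasing sequence of learning rates $(\eta_t)_{t\in\{1,\dots,T\}}$, $\eta_t>0$. Then for every $p\in\mathcal X$ the generated points $x_1,\dots,x_T$ satisfy \[ R_T(p)\le \frac{h(p)}{\eta_T}+\frac12\sum_{t=1}^T \eta_t\Big(\|g_t\|_*^2+2\|g_t\|_*\sum_{s\in\mathcal U_t}\|g_s\|_*\Big). \]
   Context: Let $\mathcal V$ be a finite-dimensional real vector space with norm $\|\cdot\|$ and dual norm $\|\cdot\|_*$, and let $\mathcal X\subset\mathcal V$ be closed and convex. A regularizer is a function $h:\mathcal V\to\mathbb R\cup\{+\infty\}$ that is lower semicontinuous, $1$-strongly convex with respect to $\|\cdot\|$ on $\mathcal X$, satisfies $\mathcal X\subset\operatorname{dom}h$, whose subdifferential admits a continuous selection, and which is nonnegative ($h\ge0$). Protocol: there are one or several agents; at each round $t=1,\dots,T$ exactly one agent $i(t)$ is active, plays $x_t\in\mathcal X$ and incurs $f_t(x_t)$, where $f_t:\mathcal V\to\mathbb R\cup\{+\infty\}$ is convex with $\mathcal X\subset\operatorname{dom}\partial f_t$; a subgradient $g_t\in\partial f_t(x_t)$ is revealed at some later moment (possibly at different times to different agents). For an agent $i$ and time $t$, $\mathcal S^i_t\subset\{1,\dots,t-1\}$ is the set of timestamps $s$ such that $g_s$ is available to agent $i$ at time $t$, with $\mathcal S^i_t\subset\mathcal S^i_{t+1}$. Set $\mathcal S_t=\mathcal S^{i(t)}_t$ and $\mathcal U_t=\{1,\dots,t-1\}\setminus\mathcal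 S_t$. DDA: $x_t=\arg\min_{x\in\mathcal X}\big\{\sum_{s\in\mathcal S_t}\langle g_s,x\rangle+h(x)/\eta_t\big\}$. Regret: $R_T(p)=\sum_{t=1}^Tf_t(x_t)-\sum_{t=1}^Tf_t(p)$. *)

(* Defs.v *)
From HB Require Import structures.
From mathcomp Require Import all_boot all_order all_algebra.
From mathcomp Require Import all_classical all_reals all_analysis.
Set Implicit Arguments. Unset Strict Implicit. Unset Printing Implicit Defensive.
Import Order.TTheory GRing.Theory Num.Theory.
Import numFieldNormedType.Exports.
Local Open Scope classical_set_scope.
Local Open Scope ring_scope.

(* The space V is 'rV[R]_n (finite dimensional real vector space); its dual is
   identified with 'rV[R]_n through the standard pairing <g, x>. *)
Definition pair {R : realType} {n : nat} (g x : 'rV[R]_n) : R :=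
  \sum_(i < n) g 0 i * x 0 i.

Definition is_norm {R : realType} {n : nat} (N : 'rV[R]_n -> R) : Prop :=
  [/\ (forall x, N x = 0 -> x = 0),
      (forall (a : R) x, N (a *: x) = `|a| * N x) &
      (forall x y, N (x + y) <= N x + N y)].

Definition dual_norm {R : realType} {n : nat} (N : 'rV[R]_n -> R)
  (g : 'rV[R]_n) : R := sup [set pair g x | x in [set x | N x <= 1]].

Definition convex_subset {R : realType} {n : nat} (X : set 'rV[R]_n) : Prop :=
  forall x y (l : R), X x -> X y -> 0 <= l <= 1 -> X (l *: x + (1 - l) *: y).

Definition convex_efun {R : realType} {n : nat} (f : 'rV[R]_n -> \bar R) : Prop :=
  (forall x, f x != -oo%E) /\
  forall x y (l : R), 0 < l < 1 ->
    (f (l *: x + (1 - l) *: y)%R <= l%:E * f x + (1 - l)%:E * f y)%E.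

Definition edom {R : realType} {n : nat} (f : 'rV[R]_n -> \bar R) : set 'rV[R]_n :=
  [set x | (f x < +oo)%E].

Definition subdiff {R : realType} {n : nat} (f : 'rV[R]_n -> \bar R)
  (x : 'rV[R]_n) : set 'rV[R]_n :=
  [set g | f x \is a fin_num /\ forall y, (f x + (pair g (y - x)%R)%:E <= f y)%E].

Definition dom_subdiff {R : realType} {n : nat} (f : 'rV[R]_n -> \bar R)
  : set 'rV[R]_n := [set x | exists g, subdiff f x g].

Definition strongly_convex_on {R : realType} {n : nat} (N : 'rV[R]_n -> R)
  (X : set 'rV[R]_n) (h : 'rV[R]_n -> \bar R) : Prop :=
  forall x y (l : R), X x -> X y -> 0 <= l <= 1 ->
    (h (l *: x + (1 - l) *: y)%R <=
       l%:E * h x + (1 - l)%:E * h y - (l * (1 - l) / 2 * N (x - y)%R ^+ 2)%:E)%E.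

Definition regularizer {R : realType} {n : nat} (N : 'rV[R]_n -> R)
  (X : set 'rV[R]_n) (h : 'rV[R]_n -> \bar R) : Prop :=
  [/\ lower_semicontinuous h,
      strongly_convex_on N X h,
      X `<=` edom h,
      (exists s : 'rV[R]_n -> 'rV[R]_n,
          (forall x, dom_subdiff h x -> subdiff h x (s x)) /\
          {within dom_subdiff h, continuous s}) &
      (forall x, (0 <= h x)%E)].

(* Main.v *)
Require Import Defs.
From HB Require Import structures.
From mathcomp Require Import all_boot all_order all_algebra.
From mathcomp Require Import all_classical all_reals all_analysis.
From mathcomp Require Import lra ring.
Import Order.TTheory GRing.Theory Num.Theory.
Import numFieldNormedType.Exports.
Local Open Scope classical_set_scope.
Local Open Scope ring_scope.

Section NormFacts.
Variables (R : realType) (n : nat) (N : 'rV[R]_n -> R).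
Hypothesis hN : is_norm N.

Lemma N0 : N 0 = 0.
Proof. case: hN => _ hZ _; by rewrite -(scale0r (0 : 'rV[R]_n)) hZ normr0 mul0r. Qed.

Lemma NN v : N (- v) = N v.
Proof. case: hN => _ hZ _; by rewrite -scaleN1r hZ normrN normr1 mul1r. Qed.

Lemma N_ge0 v : 0 <= N v.
Proof.
case: hN => _ _ hT; have := hT v (- v); rewrite subrr N0 NN => H.
lra.
Qed.

Lemma N_sum (F : 'I_n -> 'rV[R]_n) : N (\sum_j F j) <= \sum_j N (F j).
Proof.
case: hN => _ _ hT.
elim/big_ind2: _ => [|a b c d h1 h2|j _]; first by rewrite N0.
  by apply: le_trans (hT _ _) _; apply: lerD.
by [].
Qed.

Lemma coord_le (v : 'rV[R]_n) i : `|v 0 i| <= `|v|.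
Proof.
rewrite [X in _ <= X]/Num.norm /= mx_normrE.
by apply/bigmax_geP; right; exists (0, i).
Qed.

Definition Cn := \sum_(j < n) N (delta_mx 0 j).

Lemma N_upper v : N v <= Cn * `|v|.
Proof.
case: hN => _ hZ _.
rewrite {1}(row_sum_delta v); apply: le_trans (N_sum _) _.
rewrite /Cn mulr_suml; apply: ler_sum => j _; rewrite hZ mulrC.
by apply: ler_wpM2l; [exact: N_ge0| exact: coord_le].
Qed.

Lemma N_cont : continuous N.
Proof.
move=> x; apply/(@cvgrPdist_le _ _ _ _ (nbhs_filter x)) => e e0.
have C0 : 0 <= Cn by apply: sumr_ge0 => j _; exact: N_ge0.
have C1 : 0 < Cn + 1 by lra.
apply/nbhs_ballP; exists (e / (Cn + 1)); first by rewrite /= divr_gt0.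
move=> y; rewrite -ball_normE /= => hy.
have H1 : `|N x - N y| <= N (x - y).
  case: hN => _ _ hT.
  rewrite ler_norml; apply/andP; split.
    have := hT (y - x) x; rewrite subrK -opprB NN; lra.
  have := hT (x - y) y; rewrite subrK; lra.
apply: le_trans H1 _; apply: le_trans (N_upper _) _.
rewrite ltr_pdivlMr // in hy.
have := normr_ge0 (x - y); nra.
Qed.

Lemma norm_equiv : exists2 c, 0 < c & forall v, `|v| <= c * N v.
Proof.
case: hN => hE hZ _.
have key : forall v : 'rV[R]_n, v != 0 -> `| `|v|^-1 *: v | = 1.
  by move=> v v0; rewrite mx_normZ normfV normr_id mulVf // normr_eq0.
have keyN : forall v : 'rV[R]_n, v != 0 -> N (`|v|^-1 *: v) = `|v|^-1 * N v.
  move=> v v0; rewrite hZ normfV normr_id //.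
set S := [set v : 'rV[R]_n | `|v| = 1].
case: (pselect (S !=set0)) => [ne|e]; last first.
  exists 1 => // v; case: (eqVneq v 0) => [->|v0].
    by rewrite normr0 N0 mulr0.
  by exfalso; apply: e; exists (`|v|^-1 *: v); exact: key.
have cS : compact S.
  apply: bounded_closed_compact.
    exists 1; split; first exact: num_real.
    by move=> M M1 v /= ->; exact: ltW.
  have -> : S = Num.norm @^-1` [set x : R | x = 1] by [].
  by move: (@norm_continuous R 'rV[R]_n) => /continuous_closedP; apply; exact: closed_eq.
have [m mS mmin] := EVT_min_rV ne cS (continuous_subspaceT N_cont).
have m1 : `|m| = 1 by move: mS; rewrite inE.
have Nm : 0 < N m.
  rewrite lt_def N_ge0 andbT; apply/eqP => /hE m0.
  by move: m1; rewrite m0 normr0 => /eqP; rewrite eq_sym oner_eq0.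
exists (N m)^-1; first by rewrite invr_gt0.
move=> v; case: (eqVneq v 0) => [->|v0].
  by rewrite normr0 N0 mulr0.
have := mmin (`|v|^-1 *: v); rewrite inE keyN // => /(_ (key v v0)) H.
have vp : 0 < `|v| by rewrite normr_gt0.
have Np := Nm. 
have iv : 0 < `|v|^-1 by rewrite invr_gt0.
rewrite ler_pdivlMl // in H; rewrite ler_pdivlMl // mulrC //.
Qed.

Lemma pairZ (g v : 'rV[R]_n) (a : R) : pair g (a *: v) = a * pair g v.
Proof.
by rewrite /pair mulr_sumr; apply: eq_bigr => i _; rewrite mxE mulrCA.
Qed.

Lemma pair0 (g : 'rV[R]_n) : pair g 0 = 0.
Proof. by rewrite -(scale0r (0 : 'rV[R]_n)) pairZ mul0r. Qed.

Lemma dual_has_sup g : has_sup [set pair g x | x in [set x | N x <= 1]].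
Proof.
have [c c0 hc] := norm_equiv.
split; first by exists 0; exists 0; rewrite /= ?N0 ?ler01 ?pair0.
exists ((\sum_(i < n) `|g 0 i|) * c) => _ [x /= Nx <-].
rewrite /pair; apply: le_trans (_ : \sum_(i < n) `|g 0 i| * `|x| <= _).
  apply: ler_sum => i _; apply: le_trans (ler_norm _) _.
  rewrite normrM; apply: ler_wpM2l => //; exact: coord_le.
rewrite -mulr_suml; apply: ler_wpM2l; first by apply: sumr_ge0.
apply: le_trans (hc x) _; apply: le_trans (ler_wpM2l (ltW c0) Nx) _; by rewrite mulr1.
Qed.

Lemma dual_ge0 g : 0 <= dual_norm N g.
Proof.
apply: sup_upper_bound (dual_has_sup g) _ _; exists 0; last exact: pair0.
by rewrite /= N0.
Qed.

Lemma pair_le g v : pair g v <= dual_norm N g * N v.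
Proof.
case: hN => hE hZ _.
have [/eqP N0v|Nv] := eqVneq (N v) 0.
  by rewrite (hE _ (eqP N0v)) pair0 N0 mulr0.
have Np : 0 < N v by rewrite lt_def Nv N_ge0.
have H := sup_upper_bound (dual_has_sup g).
have : (N v)^-1 * pair g v <= dual_norm N g.
  apply: H; exists ((N v)^-1 *: v); last by rewrite pairZ.
  rewrite /= hZ ger0_norm; first by rewrite mulVf.
  by rewrite invr_ge0 ltW.
move=> H2; have := ler_wpM2l (ltW Np) H2.
by rewrite mulrA mulfV ?gt_eqF // mul1r mulrC.
Qed.

End NormFacts.

Lemma lim_lemma (R : realType) (z c : R) : 0 <= c ->
  (forall l : R, 0 < l < 1 -> z <= - ((1 - l) * c)) -> z <= - c.
Proof.
move=> c0 H.
have [c00|cp] := eqVneq c 0.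
  subst c; have := H (1/2); rewrite mulr0 oppr0; apply; lra.
have cp' : 0 < c by rewrite lt_def cp c0.
rewrite leNgt; apply/negP => zc.
have h2 : z <= - ((1 - 1/2) * c) by apply: H; lra.
pose l := (z + c) / (2 * c).
have l0 : 0 < l by rewrite /l divr_gt0 //; lra.
have l1 : l < 1 by rewrite /l ltr_pdivrMr; lra.
have := H l; rewrite l0 l1 => /(_ isT).
have -> : (1 - l) * c = c - (z + c) / 2.
  by rewrite /l; field; rewrite ?mulf_neq0 //; lra.
lra.
Qed.

Lemma alg (R : realType) (eta a b r : R) : 0 < eta -> 0 <= a -> 0 <= b -> 0 <= r ->
  exists l, (0 <= l <= 1) /\ forall W Q P Gx Gy : R,
    W <= l * Q + (1 - l) * P - l * (1 - l) * r ^+ 2 / (2 * eta) ->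
    P - Q <= - (r ^+ 2 / (2 * eta)) + b * r ->
    Gx - Gy <= a * r ->
    Gx + W <= Q + Gy + eta * (a ^+ 2 + 2 * a * b) / 2.
Proof.
move=> e0 a0 b0 r0.
have q0 : 0 <= r ^+ 2 / (2 * eta) by rewrite divr_ge0 ?sqr_ge0 //; lra.
have [s0|sp] := eqVneq (a + b) 0.
  have a00 : a = 0 by lra.
  have b00 : b = 0 by lra.
  exists 0; split; first lra.
  subst a b => W Q P Gx Gy hW hPQ hG.
  lra.
have sp' : 0 < a + b by rewrite lt_def sp; lra.
pose l := b / (a + b).
have l1 : 1 - l = a / (a + b) by rewrite /l; field.
exists l; split.
  apply/andP; split; first exact: divr_ge0 b0 (ltW sp').
  rewrite /l ler_pdivrMr //; lra.
move=> W Q P Gx Gy hW hPQ hG.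
have la : 0 <= 1 - l by rewrite l1; exact: divr_ge0 a0 (ltW sp').
have k1 : W - Q <= (1 - l) * (b * r - r ^+ 2 / (2 * eta)) - l * (1 - l) * r ^+ 2 / (2 * eta).
  have := ler_wpM2l la hPQ; lra.
have E : eta * (a ^+ 2 + 2 * a * b) / 2 - (a * r + (1 - l) * (b * r) - (1 - l) * (1 + l) * (r ^+ 2 / (2 * eta)))
   = a * (a + 2 * b) * (r / (a + b) - eta) ^+ 2 / (2 * eta).
  rewrite /l; field; lra.
have F : 0 <= a * (a + 2 * b) * (r / (a + b) - eta) ^+ 2 / (2 * eta).
  apply: divr_ge0; last lra.
  apply: mulr_ge0; last exact: sqr_ge0.
  apply: mulr_ge0; lra.
have : a * r + (1 - l) * (b * r) - (1 - l) * (1 + l) * (r ^+ 2 / (2 * eta)) <= eta * (a ^+ 2 + 2 * a * b) / 2 by lra.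
move: k1; set q := r ^+ 2 / (2 * eta).
have -> : l * (1 - l) * r ^+ 2 / (2 * eta) = l * (1 - l) * q by rewrite /q !mulrA.
lra.
Qed.


Section PairFacts.
Variables (R : realType) (n : nat).

Lemma pairD (g u v : 'rV[R]_n) : pair g (u + v) = pair g u + pair g v.
Proof. by rewrite /pair -big_split; apply: eq_bigr => i _; rewrite mxE mulrDr. Qed.

Lemma pairB (g u v : 'rV[R]_n) : pair g (u - v) = pair g u - pair g v.
Proof.
rewrite /pair -sumrB; apply: eq_bigr => i _; rewrite !mxE mulrBr //.
Qed.

Lemma sum_pair_comb (gs : nat -> 'rV[R]_n) (r : seq nat) (P : pred nat) (l : R) u v :
  \sum_(s <- r | P s) pair (gs s) (l *: u + (1 - l) *: v) =
  l * \sum_(s <- r | P s) pair (gs s) u + (1 - l) * \sum_(s <- r | P s) pair (gs s) v.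
Proof.
rewrite !mulr_sumr -big_split; apply: eq_bigr => i _.
by rewrite pairD !pairZ.
Qed.

Lemma sum_pair_sub (gs : nat -> 'rV[R]_n) (r : seq nat) (P : pred nat) u v :
  \sum_(s <- r | P s) pair (gs s) (u - v) =
  \sum_(s <- r | P s) pair (gs s) u - \sum_(s <- r | P s) pair (gs s) v.
Proof. by rewrite -sumrB; apply: eq_bigr => i _; rewrite pairB. Qed.

End PairFacts.

Lemma helper1 (R : realType) (l A1 A2 Z Q1 Q2 et r : R) : (Z / et <= (l * Q1 + (1 - l) * Q2 - l * (1 - l) / 2 * r ^+ 2) / et) -> (l * A1 + (1 - l) * A2 + Z / et <=
    l * (A1 + Q1 / et) + (1 - l) * (A2 + Q2 / et) -
    l * (1 - l) / 2 * r ^+ 2 / et).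
Proof. move=> *. lra. Qed.

Lemma helper2 (R : realType) (l A1 A2 Z Q1 Q2 et r : R) : 0 < et ->
  A2 + Q2 / et <= l * A1 + (1 - l) * A2 + Z / et ->
  Z * et^-1 <= (l * Q1 + (1 - l) * Q2 - l * (1 - l) / 2 * r ^+ 2) * et^-1 ->
  l * (A2 + Q2 / et - (A1 + Q1 / et) - - ((1 - l) * (r ^+ 2 / (2 * et)))) <= 0.
Proof.
move=> e0 h1 h2.
rewrite invfM; lra.
Qed.

Theorem theorem1 (R : realType) (n : nat) (N : 'rV[R]_n -> R)
  (X : set 'rV[R]_n) (h : 'rV[R]_n -> \bar R)
  (I : Type) (T : nat) (agent : nat -> I) (S : I -> nat -> pred nat)
  (f : nat -> 'rV[R]_n -> \bar R) (x g : nat -> 'rV[R]_n) (eta : nat -> R)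
  (p : 'rV[R]_n) :
  is_norm N ->
  closed X -> convex_subset X ->
  regularizer N X h ->
  (0 < T)%N ->
  (* losses *)
  (forall t, (1 <= t <= T)%N -> convex_efun (f t) /\ X `<=` dom_subdiff (f t)) ->
  (* information sets *)
  (forall i t s, (1 <= t <= T)%N -> S i t s -> (1 <= s < t)%N) ->
  (forall i t s, (1 <= t < T)%N -> S i t s -> S i t.+1 s) ->
  (* learning rates: positive and non-increasing *)
  (forall t, (1 <= t <= T)%N -> 0 < eta t) ->
  (forall t, (1 <= t < T)%N -> eta t.+1 <= eta t) ->
  (* revealed subgradients *)
  (forall t, (1 <= t <= T)%N -> subdiff (f t) (x t) (g t)) ->
  (* DDA iterates *)
  (forall t, (1 <= t <= T)%N ->
     X (x t) /\
     forall y, X y ->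
       ((\sum_(1 <= s < t | S (agent t) t s) pair (g s) (x t))%:E
          + h (x t) * (eta t)^-1%:E <=
        (\sum_(1 <= s < t | S (agent t) t s) pair (g s) y)%:E
          + h y * (eta t)^-1%:E)%E) ->
  X p ->
  ((\sum_(1 <= t < T.+1) f t (x t)) - (\sum_(1 <= t < T.+1) f t p) <=
     h p * (eta T)^-1%:E +
     (1 / 2 * \sum_(1 <= t < T.+1)
        eta t * (dual_norm N (g t) ^+ 2 +
                 2 * dual_norm N (g t) *
                   \sum_(1 <= s < t | ~~ S (agent t) t s) dual_norm N (g s)))%:E)%E.
Proof.
move=> hN cX cvX [hlsc hsc hdom _ hpos] T0 hf hS1 hS2 heta0 hetad hsub hdda Xp.
pose hr z := fine (h z).
have hrE : forall z, X z -> h z = (hr z)%:E.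
  move=> z Xz; rewrite /hr; move: (hpos z) (hdom z Xz); rewrite /edom /=.
  by case: (h z).
have hr0 : forall z, X z -> 0 <= hr z.
  by move=> z Xz; have := hpos z; rewrite hrE // lee_fin.
have hscR : forall z1 z2 l, X z1 -> X z2 -> 0 <= l <= 1 ->
    hr (l *: z1 + (1 - l) *: z2) <= l * hr z1 + (1 - l) * hr z2 - l * (1 - l) / 2 * N (z1 - z2) ^+ 2.
  move=> z1 z2 l X1 X2 hl; have := hsc z1 z2 l X1 X2 hl.
  have Xc : X (l *: z1 + (1 - l) *: z2) by exact: cvX.
  by rewrite !hrE // -!EFinM -EFinD -EFinB lee_fin.
have hoptR : forall t, (1 <= t <= T)%N -> X (x t) /\ forall y, X y ->
    \sum_(1 <= s < t | S (agent t) t s) pair (g s) (x t) + hr (x t) / eta t <=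
    \sum_(1 <= s < t | S (agent t) t s) pair (g s) y + hr y / eta t.
  move=> t ht; have [Xt H] := hdda t ht; split => // y Xy.
  by have := H y Xy; rewrite !hrE // -!EFinM -!EFinD lee_fin.
pose B t := eta t * (dual_norm N (g t) ^+ 2 + 2 * dual_norm N (g t) *
                   \sum_(1 <= s < t | ~~ S (agent t) t s) dual_norm N (g s)).
have main : forall j, (j <= T)%N -> forall w, X w ->
    \sum_(1 <= t < j.+1) pair (g t) (x t) <=
    \sum_(1 <= t < j.+1) pair (g t) w + hr w / eta (minn j.+1 T) +
    1 / 2 * \sum_(1 <= t < j.+1) B t.
  elim=> [|j IH] hj w Xw.
    rewrite !big_geq // mulr0 !addr0 add0r.
    have -> : minn 1 T = 1%N by apply/minn_idPl.
    by apply: divr_ge0; [exact: hr0 | apply: ltW; apply: heta0].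
  have k1 : (1 <= j.+1 <= T)%N by [].
  have [Xxk optk] := hoptR _ k1.
  set et := eta j.+1.
  have e0 : 0 < et := heta0 _ k1.
  set a := dual_norm N (g j.+1).
  set b := \sum_(1 <= s < j.+1 | ~~ S (agent j.+1) j.+1 s) dual_norm N (g s).
  set r := N (w - x j.+1).
  have a0 : 0 <= a by exact: dual_ge0.
  have b0 : 0 <= b by apply: sumr_ge0 => s _; exact: dual_ge0.
  have r0 : 0 <= r by exact: N_ge0.
  have [l [hl hstep]] := @alg R _ _ _ _ e0 a0 b0 r0.
  have Xz : X (l *: w + (1 - l) *: x j.+1) by exact: cvX.
  have IHz := IH (ltnW hj) _ Xz.
  have mj : minn j.+1 T = j.+1 by apply/minn_idPl.
  rewrite mj in IHz.
  rewrite !(@big_nat_recr _ _ _ j.+1 1) //=.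
  set SA := fun y => \sum_(1 <= s < j.+1) pair (g s) y.
  set SD := fun y => \sum_(1 <= s < j.+1 | S (agent j.+1) j.+1 s) pair (g s) y.
  set SU := fun y => \sum_(1 <= s < j.+1 | ~~ S (agent j.+1) j.+1 s) pair (g s) y.
  have hsplit : forall y, SA y = SD y + SU y.
    by move=> y; rewrite /SA /SD /SU (bigID (S (agent j.+1) j.+1)).
  have SAc : forall l' u v, SA (l' *: u + (1 - l') *: v) = l' * SA u + (1 - l') * SA v.
    by move=> l' u v; rewrite /SA sum_pair_comb.
  have SDc : forall l' u v, SD (l' *: u + (1 - l') *: v) = l' * SD u + (1 - l') * SD v.
    by move=> l' u v; rewrite /SD sum_pair_comb.
  have Nxw : N (x j.+1 - w) = r by rewrite /r -opprB NN.
  have hG : pair (g j.+1) (x j.+1) - pair (g j.+1) w <= a * r.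
    by rewrite -pairB -Nxw; exact: pair_le.
  have hU : SU (x j.+1) - SU w <= b * r.
    rewrite /SU -sum_pair_sub -Nxw /b mulr_suml; apply: ler_sum => s _.
    exact: pair_le.
  have ie0 : 0 < et^-1 by rewrite invr_gt0.
  have hW : SA (l *: w + (1 - l) *: x j.+1) + hr (l *: w + (1 - l) *: x j.+1) / et <=
      l * (SA w + hr w / et) + (1 - l) * (SA (x j.+1) + hr (x j.+1) / et)
      - l * (1 - l) * r ^+ 2 / (2 * et).
    have := ler_wpM2r (ltW ie0) (hscR _ _ _ Xw Xxk hl).
    rewrite SAc -/r.
    have -> : l * (1 - l) * r ^+ 2 / (2 * et) = (l * (1 - l) / 2 * r ^+ 2) * et^-1.
      by field; rewrite gt_eqF.
    set Z := hr (l *: w + (1 - l) *: x j.+1); set Q1 := hr w; set Q2 := hr (x j.+1); set A1 := SA w; set A2 := SA (x j.+1).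
    move=> H. move: H. exact: helper1.
  have hsc' : SD (x j.+1) + hr (x j.+1) / et - (SD w + hr w / et) <= - (r ^+ 2 / (2 * et)).
    apply: lim_lemma; first by apply: divr_ge0; [exact: sqr_ge0 | lra].
    move=> l' hl'.
    have hl'' : 0 <= l' <= 1 by lra.
    have Xz' : X (l' *: w + (1 - l') *: x j.+1) by exact: cvX.
    have h1 : SD (x j.+1) + hr (x j.+1) / et <= SD (l' *: w + (1 - l') *: x j.+1) + hr (l' *: w + (1 - l') *: x j.+1) / et := optk _ Xz'.
    have h2 : hr (l' *: w + (1 - l') *: x j.+1) * et^-1 <= (l' * hr w + (1 - l') * hr (x j.+1) - l' * (1 - l') / 2 * r ^+ 2) * et^-1 := ler_wpM2r (ltW ie0) (hscR _ _ _ Xw Xxk hl'').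
    rewrite SDc in h1.
    have l'p : 0 < l' by lra.
    rewrite -subr_le0 -(pmulr_rle0 _ l'p).
    exact: (@helper2 _ _ _ _ _ _ _ _ _ e0 h1 h2).
  have hPQ : (SA (x j.+1) + hr (x j.+1) / et) - (SA w + hr w / et) <= - (r ^+ 2 / (2 * et)) + b * r.
    rewrite !hsplit; lra.
  have := hstep _ _ _ _ _ hW hPQ hG.
  have hB : B j.+1 = et * (a ^+ 2 + 2 * a * b) by [].
  have hrw : hr w / et <= hr w / eta (minn j.+2 T).
    case: (ltnP j.+1 T) => hjT.
      have -> : minn j.+2 T = j.+2 by apply/minn_idPl.
      have k2 : (1 <= j.+2 <= T)%N by rewrite hjT.
      have e2 := heta0 _ k2.
      have le2 : eta j.+2 <= et by apply: hetad; rewrite hjT.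
      apply: ler_wpM2l; first exact: hr0.
      by rewrite lef_pV2 ?posrE.
    have -> : minn j.+2 T = j.+1.
      have -> : T = j.+1 by apply/eqP; rewrite eqn_leq hj hjT.
      by apply/minn_idPr.
    by [].
  have IHz' : \sum_(1 <= t < j.+1) pair (g t) (x t) <= SA (l *: w + (1 - l) *: x j.+1) + hr (l *: w + (1 - l) *: x j.+1) / et + 1/2 * \sum_(1 <= t < j.+1) B t.
    exact: IHz.
  have -> : \sum_(1 <= i < j.+1) pair (g i) w = SA w by [].
  rewrite hB.
  move: IHz'; clear IHz IH; move=> IHz'.
  lra.
have M := main T (leqnn T) p Xp.
rewrite (_ : minn T.+1 T = T) in M; last by apply/minn_idPr.
have fxE : forall t, (1 <= t < T.+1)%N -> f t (x t) = (fine (f t (x t)))%:E.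
  by move=> t ht; have [fin _] := hsub t ht; rewrite fineK.
have fpE : forall t, (1 <= t < T.+1)%N -> f t p = (fine (f t p))%:E.
  move=> t ht; have [_ hd] := hf t ht; have [g' [fin _]] := hd p Xp.
  by rewrite fineK.
have hlin : \sum_(1 <= t < T.+1) fine (f t (x t)) - \sum_(1 <= t < T.+1) fine (f t p) <=
    \sum_(1 <= t < T.+1) pair (g t) (x t) - \sum_(1 <= t < T.+1) pair (g t) p.
  rewrite -!sumrB; apply: ler_sum_nat => t ht.
  have [_ H] := hsub t ht; have := H p.
  rewrite (fxE t ht) (fpE t ht) -EFinD lee_fin pairB; lra.
rewrite (eq_big_nat _ _ fxE) (eq_big_nat _ _ fpE) !sumEFin hrE // -EFinM -EFinB -EFinD lee_fin.
rewrite -[\sum_(1 <= t < T.+1) eta t * _]/(\sum_(1 <= t < T.+1) B t).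
lra.
Qed.
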